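(* Let $n\ge 1$ and let $B^{[n]}$ be the $n$-th Kronecker power of $$B=\begin{bmatrix}1 & \sqrt{2}-1\\ 1 & -\sqrt{2}-1\end{bmatrix},$$ with its $2^n$ rows labeled by the vectors of $F^n$ ($F=\{0,1\}$ the binary field) in lexicographic order. Let $K^{[n]}$ be the $n$-th Kronecker power of $K=\frac{1}{\sqrt2}\begin{bmatrix}1&1\\1&-1\end{bmatrix}$. Then the rows of $B^{[n]}$ whose labels have even Hamming weight form a basis of the eigenspace of the eigenvalue $1$ of $K^{[n]}$, i.e. of $\{x\in\mathbb{R}^{2^n} : xK^{[n]}=x\}$ (row vectors).
   Context: For a matrix $M$, the Kronecker powers are $M^{[1]}=M$ and $M^{[m]}=M^{[m-1]}\otimes M$. Lexicographic labeling: the row with index $j$ ($0\le j<2^n$) is labeled by the binary expansion of $j$ written as a vector of length $n$ (most significant bit first). *)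

(* Defs.v *)
From HB Require Import structures.
From mathcomp Require Import all_boot all_order all_algebra.
From mathcomp Require Import reals.
Set Implicit Arguments. Unset Strict Implicit. Unset Printing Implicit Defensive.
Import Order.TTheory GRing.Theory Num.Theory.
Local Open Scope ring_scope.

(* Kronecker product: row index i of A (x) B (A : m x n, B : p x q) is
   i = i1 * p + i2 with i1 < m, i2 < p (standard convention). *)
Lemma kron_divP m p (i : 'I_(m * p)) : (i %/ p < m)%N.
Proof.
case: p i => [|p] i; first by case: i => k; rewrite muln0.
by rewrite ltn_divLR.
Qed.

Lemma kron_modP m p (i : 'I_(m * p)) : (i %% p < p)%N.
Proof.
case: p i => [|p] i; first by case: i => k; rewrite muln0.
by rewrite ltn_pmod.
Qed.

Definition kron (R : pzRingType) m n p q (A : 'M[R]_(m, n)) (B : 'M[R]_(p, q))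
  : 'M[R]_(m * p, n * q) :=
  \matrix_(i, j) (A (Ordinal (kron_divP i)) (Ordinal (kron_divP j))
                  * B (Ordinal (kron_modP i)) (Ordinal (kron_modP j))).

Fixpoint kpow (R : pzRingType) (M : 'M[R]_2) (n : nat) : 'M[R]_(2 ^ n) :=
  match n return 'M[R]_(2 ^ n) with
  | 0 => 1%:M
  | n'.+1 => castmx (esym (expnSr 2 n'), esym (expnSr 2 n')) (kron (kpow M n') M)
  end.

(* Hamming weight of the length-n binary label of the row index j
   (number of ones in the binary expansion of j). *)
Definition hweight (n j : nat) : nat := (\sum_(k < n) odd (j %/ 2 ^ k))%N.

Definition Bmat (R : rcfType) : 'M[R]_2 :=
  \matrix_(i < 2, j < 2)
    (if i == 0 then (if j == 0 then 1 else Num.sqrt 2 - 1)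
     else (if j == 0 then 1 else - Num.sqrt 2 - 1)).

Definition Kmat (R : rcfType) : 'M[R]_2 :=
  (Num.sqrt 2)^-1 *: \matrix_(i < 2, j < 2)
    (if (i == 1) && (j == 1) then -1 else 1).

(* Main.v *)
Require Import Defs.
From HB Require Import structures.
From mathcomp Require Import all_boot all_order all_algebra.
From mathcomp Require Import reals ring lra.
Set Implicit Arguments. Unset Strict Implicit. Unset Printing Implicit Defensive.
Import Order.TTheory GRing.Theory Num.Theory.
Local Open Scope ring_scope.
Lemma kidxP n q (a : 'I_n) (b : 'I_q) : (a * q + b < n * q)%N.
Proof.
have h1 : (a * q + b < a.+1 * q)%N by rewrite mulSn addnC ltn_add2r.
apply: leq_trans h1 _; exact: leq_mul (ltn_ord a) (leqnn q).
Qed.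
Definition kidx n q (a : 'I_n) (b : 'I_q) : 'I_(n * q) := Ordinal (kidxP a b).

Lemma kidx_div n q (a : 'I_n) (b : 'I_q) : Ordinal (kron_divP (kidx a b)) = a.
Proof.
apply: val_inj => /=; have q0 : (0 < q)%N by case: b => b /= /(leq_ltn_trans (leq0n b)).
by rewrite divnMDl // divn_small // addn0.
Qed.

Lemma kidx_mod n q (a : 'I_n) (b : 'I_q) : Ordinal (kron_modP (kidx a b)) = b.
Proof. by apply: val_inj => /=; rewrite modnMDl modn_small. Qed.

Lemma sum_kidx (R : nmodType) n q (F : 'I_(n * q) -> R) :
  \sum_l F l = \sum_(a < n) \sum_(b < q) F (kidx a b).
Proof.
rewrite pair_big /=.
rewrite (reindex (fun p : 'I_n * 'I_q => kidx p.1 p.2)) //=.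
exists (fun l => (Ordinal (kron_divP l), Ordinal (kron_modP l))) => [[a b] _|l _] /=.
  by rewrite kidx_div kidx_mod.
by apply: val_inj => /=; rewrite -divn_eq.
Qed.

Lemma kron_mul (R : comPzRingType) m n p q r s (A : 'M[R]_(m, n)) (B : 'M[R]_(p, q))
  (C : 'M[R]_(n, r)) (D : 'M[R]_(q, s)) :
  kron A B *m kron C D = kron (A *m C) (B *m D).
Proof.
apply/matrixP => i j; rewrite !mxE sum_kidx mulr_suml; apply: eq_bigr => a _.
rewrite mulr_sumr; apply: eq_bigr => b _; rewrite !mxE kidx_div kidx_mod.
by rewrite mulrACA.
Qed.

Lemma castmx_mul2 (R : pzRingType) m m' (e : m = m') (X Y : 'M[R]_m) :
  castmx (e, e) X *m castmx (e, e) Y = castmx (e, e) (X *m Y).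
Proof. by case: m' / e; rewrite !castmx_id. Qed.

Lemma kpow_mul (R : comPzRingType) (A C : 'M[R]_2) n :
  kpow A n *m kpow C n = kpow (A *m C) n.
Proof.
elim: n => [|n IH] /=; first by rewrite mul1mx.
by rewrite castmx_mul2 kron_mul IH.
Qed.

Lemma kron_eq m p (i j : 'I_(m * p)) :
  (i == j) = (Ordinal (kron_divP i) == Ordinal (kron_divP j)) &&
             (Ordinal (kron_modP i) == Ordinal (kron_modP j)).
Proof.
apply/eqP/andP => [->|[/eqP h1 /eqP h2]]; first by [].
apply: val_inj; rewrite /= (divn_eq i p) (divn_eq j p).
by move: h1 h2 => [->] [->].
Qed.

Lemma kpow1 (R : comPzRingType) n : kpow (1%:M : 'M[R]_2) n = 1%:M.
Proof.
elim: n => [|n IH] //=; rewrite IH.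
apply/matrixP => i j; rewrite castmxE !mxE.
set i' := cast_ord _ i; set j' := cast_ord _ j.
have -> : (i == j) = (i' == j').
  by apply/idP/idP => /eqP h; apply/eqP; [rewrite /i' /j' h | apply: val_inj; move/(congr1 val): h].
rewrite kron_eq.
case: (_ == _); case: (_ == _); by rewrite /= ?mulr1 ?mulr0 ?mul0r.
Qed.

Lemma hweightS n i : hweight n.+1 i = (hweight n (i %/ 2) + odd i)%N.
Proof.
rewrite /hweight big_ord_recl /= expn0 divn1 addnC; congr (_ + _)%N.
by apply: eq_bigr => k _; rewrite /bump /= add1n expnS divnMA.
Qed.

Definition Dmat (R : pzRingType) : 'M[R]_2 := diag_mx (\row_(k < 2) (-1) ^+ k).

Lemma kpowD (R : comPzRingType) n :
  kpow (Dmat R) n = diag_mx (\row_(i < 2 ^ n) (-1) ^+ hweight n i).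
Proof.
elim: n => [|n IH] /=.
  by apply/matrixP => i j; rewrite !mxE /hweight big_ord0 expr0.
rewrite IH; apply/matrixP => i j; rewrite castmxE !mxE.
set i' := cast_ord _ i; set j' := cast_ord _ j.
have -> : (i == j) = (i' == j').
  by apply/idP/idP => /eqP h; apply/eqP; [rewrite /i' /j' h | apply: val_inj; move/(congr1 val): h].
rewrite kron_eq /=.
rewrite hweightS exprD -modn2.
case: (_ == _); case: (_ == _); by rewrite /= ?mulr1n ?mulr0n ?mulr0 ?mul0r.
Qed.
Definition Cmat (R : rcfType) : 'M[R]_2 :=
  \matrix_(i < 2, j < 2)
    (if i == 0 then (if j == 0 then (2 + Num.sqrt 2) / 4 else (2 - Num.sqrt 2) / 4)
     else (if j == 0 then Num.sqrt 2 / 4 else - (Num.sqrt 2) / 4)).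

Lemma sqrt2_facts (R : rcfType) : Num.sqrt (2:R) * Num.sqrt 2 = 2 /\ (Num.sqrt (2:R))^-1 = Num.sqrt 2 / 2.
Proof.
have hs : Num.sqrt (2:R) * Num.sqrt 2 = 2 by rewrite -expr2 sqr_sqrtr ?ler0n.
have hn : Num.sqrt (2:R) != 0 by rewrite sqrtr_eq0 -ltNge ltr0n.
split => //.
apply: (mulfI hn); rewrite mulfV // mulrA hs divff //.
by rewrite pnatr_eq0.
Qed.

Lemma BK (R : rcfType) : Bmat R *m Kmat R = Dmat R *m Bmat R.
Proof.
have [hs hi] := sqrt2_facts R.
apply/matrixP => i j; rewrite !mxE !big_ord_recl !big_ord0 !mxE.
rewrite hi.
case: i => [[|[|//]] ?]; case: j => [[|[|//]] ?] /=; rewrite ?mxE /=; nra.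
Qed.

Lemma BC (R : rcfType) : Bmat R *m Cmat R = 1%:M.
Proof.
have [hs hi] := sqrt2_facts R.
apply/matrixP => i j; rewrite !mxE !big_ord_recl !big_ord0 !mxE.
case: i => [[|[|//]] ?]; case: j => [[|[|//]] ?] /=; nra.
Qed.

Lemma CB (R : rcfType) : Cmat R *m Bmat R = 1%:M.
Proof.
have [hs hi] := sqrt2_facts R.
apply/matrixP => i j; rewrite !mxE !big_ord_recl !big_ord0 !mxE.
case: i => [[|[|//]] ?]; case: j => [[|[|//]] ?] /=; nra.
Qed.

Lemma sum_even (R : realType) n (P : 'M[R]_(2 ^ n)) (c : 'I_(2 ^ n) -> R) :
  \sum_(i < 2 ^ n | ~~ odd (hweight n i)) c i *: row i P =
  (\row_i (if ~~ odd (hweight n i) then c i else 0)) *m P.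
Proof.
rewrite mulmx_sum_row [RHS](bigID (fun i : 'I_(2 ^ n) => ~~ odd (hweight n i))) /=.
rewrite [X in _ = _ + X]big1 ?addr0 => [|i Hi]; last by rewrite mxE (negbTE Hi) scale0r.
by apply: eq_bigr => i Hi; rewrite mxE Hi.
Qed.

Lemma sign_even (R : pzRingType) h : ~~ odd h -> (-1) ^+ h = 1 :> R.
Proof. by move=> H; rewrite -signr_odd (negbTE H) expr0. Qed.

Lemma sign_odd (R : pzRingType) h : odd h -> (-1) ^+ h = -1 :> R.
Proof. by move=> H; rewrite -signr_odd H expr1. Qed.

Theorem lemma1 (R : realType) (n : nat) (hn : (1 <= n)%N) :
  (forall c : 'I_(2 ^ n) -> R,
     \sum_(i < 2 ^ n | ~~ odd (hweight n i)) c i *: row i (kpow (Bmat R) n) = 0 ->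
     forall i : 'I_(2 ^ n), ~~ odd (hweight n i) -> c i = 0)
  /\
  (forall x : 'rV[R]_(2 ^ n),
     x *m kpow (Kmat R) n = x <->
     exists c : 'I_(2 ^ n) -> R,
       x = \sum_(i < 2 ^ n | ~~ odd (hweight n i)) c i *: row i (kpow (Bmat R) n)).
Proof.
set P := kpow (Bmat R) n; set Q := kpow (Cmat R) n; set Kp := kpow (Kmat R) n.
have PQ : P *m Q = 1%:M by rewrite /P /Q kpow_mul BC kpow1.
have QP : Q *m P = 1%:M by rewrite /P /Q kpow_mul CB kpow1.
have PK : P *m Kp = diag_mx (\row_(i < 2 ^ n) (-1) ^+ hweight n i) *m P.
  by rewrite /P /Kp kpow_mul BK -kpow_mul kpowD.
split.
  move=> c; rewrite sum_even => H i Hi.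
  set u := \row_i _ in H.
  have u0 : u = 0 by rewrite -[u]mulmx1 -PQ mulmxA H mul0mx.
  by have := congr1 (fun v : 'rV_(2 ^ n) => v 0 i) u0; rewrite /= !mxE Hi.
move=> x; split => [Hx|[c ->]].
  set y := x *m Q.
  have hxy : x = y *m P by rewrite /y -mulmxA QP mulmx1.
  have hyD : y *m diag_mx (\row_(i < 2 ^ n) (-1) ^+ hweight n i) = y.
    rewrite -[LHS]mulmx1 -PQ mulmxA -(mulmxA y) -PK mulmxA -hxy Hx hxy.
    by rewrite -mulmxA PQ mulmx1.
  exists (fun i => y 0 i); rewrite sum_even hxy; congr (_ *m _).
  apply/rowP => i; rewrite [RHS]mxE; case: ifP => // /negbFE Ho.
  have := congr1 (fun v : 'rV_(2 ^ n) => v 0 i) hyD; rewrite /= mul_mx_diag !mxE sign_odd //.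
  move=> h; lra.
rewrite sum_even -mulmxA PK mulmxA; congr (_ *m _).
apply/rowP => i; rewrite mul_mx_diag !mxE; case: ifP => [He|]; last by rewrite mul0r.
by rewrite sign_even // mulr1.
Qed.
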